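(* Let $\mathcal F=\{F^c_{t,k}\}$ be an F-system and $R,\lambda$ reals such that $|F^A_t\cup F^B_t|\le Rt+\lambda$ for every positive integer $t$. Then for every even positive integer $t$, $|Z_{3t,2t}|\ge|S_t\cup Z_{3t/2,t}|-(3R-4)t-\lambda$.
   Context: F-system: a family $\mathcal F=\{F^c_{t,k}\}$ of sets of positive integers, indexed by $c\in\{A,B\}$ and integers $0<k\le t$, such that (F1) $|F^c_{t,k}|\ge k$ for all $c,t,k$; and (F2) $F^A_{t,k}\cap F^B_{t',k'}=\emptyset$ for all $k\le t$, $k'\le t'$ with $k+k'\le\max(t,t')$. Notation: $F^c_t=\bigcup_{0<\kappa\le\tau\le t}F^c_{\tau,\kappa}$ for $c\in\{A,B\}$; $S_t=F^A_t\cap F^B_t$; for even $t$, $Z_{3t/2,t}=F^A_{3t/2,t}\cap F^B_{3t/2,t}$ (so also $Z_{3t,2t}=F^A_{3t,2t}\cap F^B_{3t,2t}$). *)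

(* Defs.v *)
From HB Require Import structures.
From mathcomp Require Import all_boot all_order all_algebra.
Set Implicit Arguments. Unset Strict Implicit. Unset Printing Implicit Defensive.
Import Order.TTheory GRing.Theory Num.Theory.

Inductive colour := cA | cB.

(* A Ffamily of sets of positive integers indexed by colour and (t,k):
   x belongs to F^c_{t,k} iff  F c t k x.  Only indices 0<k<=t are meaningful. *)
Definition Ffamily := colour -> nat -> nat -> nat -> Prop.

Definition has_at_least (k : nat) (P : nat -> Prop) : Prop :=
  exists s : seq nat, [/\ uniq s, k <= size s & forall x, x \in s -> P x].

Definition card_is (P : nat -> Prop) (n : nat) : Prop :=
  exists s : seq nat, [/\ uniq s, size s = n & forall x, P x <-> x \in s].

Definition valid_idx (t k : nat) : Prop := 0 < k <= t.

Definition is_Fsystem (F : Ffamily) : Prop :=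
  [/\ (forall c t k x, valid_idx t k -> F c t k x -> 0 < x),
      (forall c t k, valid_idx t k -> has_at_least k (F c t k)) &
      (forall t k t' k' x, valid_idx t k -> valid_idx t' k' ->
          k + k' <= maxn t t' -> ~ (F cA t k x /\ F cB t' k' x))].

(* F^c_t = union of F^c_{tau,kappa} over 0 < kappa <= tau <= t *)
Definition Fup (F : Ffamily) (c : colour) (t : nat) (x : nat) : Prop :=
  exists tau kappa, [/\ 0 < kappa, kappa <= tau, tau <= t & F c tau kappa x].

Definition Sset (F : Ffamily) (t : nat) (x : nat) : Prop :=
  Fup F cA t x /\ Fup F cB t x.

Definition Zset (F : Ffamily) (t k : nat) (x : nat) : Prop :=
  F cA t k x /\ F cB t k x.

(* Main.v *)
Require Import Defs.
From HB Require Import structures.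
From mathcomp Require Import all_boot all_order all_algebra.
From mathcomp Require Import zify ring lra.
From Stdlib Require Import ClassicalEpsilon.
Import Order.TTheory GRing.Theory Num.Theory.
Local Open Scope ring_scope.

Definition pb (P : nat -> Prop) (x : nat) : bool :=
  if excluded_middle_informative (P x) then true else false.

Lemma pbP (P : nat -> Prop) x : reflect (P x) (pb P x).
Proof. rewrite /pb; case: excluded_middle_informative => h; constructor => //. Qed.

Lemma card_filter (U : seq nat) (P : nat -> Prop) :
  uniq U -> (forall x, P x -> x \in U) ->
  card_is P (count (pb P) U).
Proof.
move=> uU sub; exists (filter (pb P) U); split.
- exact: filter_uniq.
- by rewrite size_filter.
- move=> x; rewrite mem_filter; split.
  + by move=> Px; rewrite (sub _ Px) andbT; apply/pbP.
  + by case/andP => /pbP.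
Qed.

Lemma count_ge (U : seq nat) (P : nat -> Prop) k :
  has_at_least k P -> (forall x, P x -> x \in U) -> (k <= count (pb P) U)%N.
Proof.
case=> s [us ks Ps] sub.
apply: (leq_trans ks); rewrite -size_filter.
apply: uniq_leq_size => // x xs; rewrite mem_filter (sub _ (Ps _ xs)) andbT.
by apply/pbP; apply: Ps.
Qed.

Theorem lemma5 (K : realFieldType) (F : Ffamily) (R lambda : K) :
  is_Fsystem F ->
  (forall t : nat, (0 < t)%N ->
     exists n : nat, card_is (fun x => Fup F cA t x \/ Fup F cB t x) n /\
                     n%:R <= R * t%:R + lambda) ->
  forall t : nat, (0 < t)%N -> ~~ odd t ->
    exists nZ nSZ : nat,
      [/\ card_is (Zset F (3 * t) (2 * t)) nZ,
          card_is (fun x => Sset F t x \/ Zset F ((3 * t) %/ 2) t x) nSZ &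
          nSZ%:R - (3%:R * R - 4%:R) * t%:R - lambda <= nZ%:R].
Proof.
move=> [Fpos F1 F2] HU t t0 te.
have t3 : (0 < 3 * t)%N by lia.
have [n [[U [uU sU memU]] HnR]] := HU _ t3.
have h1 : (t <= (3 * t) %/ 2)%N by rewrite leq_divRL //; lia.
have h2 : ((3 * t) %/ 2 <= 3 * t)%N by exact: leq_div.
have inU c x : Fup F c (3 * t) x -> x \in U.
  by move=> h; apply/memU; case: c h => h; [left|right].
have upA c tau k x : (0 < k)%N -> (k <= tau)%N -> (tau <= 3 * t)%N -> F c tau k x -> x \in U.
  by move=> a b d e; apply: (inU c); exists tau, k; split.
have upF c t' x : (t' <= 3 * t)%N -> Fup F c t' x -> x \in U.
  move=> le [tau [k [a b d e]]]; apply: (upA c tau k) => //; exact: leq_trans le.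
pose PA := F cA (3 * t) (2 * t).
pose PB := F cB (3 * t) (2 * t).
pose PZ := Zset F (3 * t) (2 * t).
pose PS := fun x => Sset F t x \/ Zset F ((3 * t) %/ 2) t x.
have sA : forall x, PA x -> x \in U by move=> x; apply: (upA cA); lia.
have sB : forall x, PB x -> x \in U by move=> x; apply: (upA cB); lia.
have sZ : forall x, PZ x -> x \in U by move=> x [h _]; exact: sA.
have sS : forall x, PS x -> x \in U.
  move=> x [[h _]|[h _]]; first by apply: (upF cA t) => //; lia.
  exact: (upA cA _ t x t0 h1 h2 h).
exists (count (pb PZ) U), (count (pb PS) U); split.
- exact: card_filter.
- exact: card_filter.
have vA : valid_idx (3 * t) (2 * t) by rewrite /valid_idx; lia.
have v2 : valid_idx ((3 * t) %/ 2) t by rewrite /valid_idx t0 h1.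
have cA2 : (2 * t <= count (pb PA) U)%N by apply: count_ge => //; apply: F1.
have cB2 : (2 * t <= count (pb PB) U)%N by apply: count_ge => //; apply: F1.
have eZ : count (predI (pb PA) (pb PB)) U = count (pb PZ) U.
  apply: eq_count => x /=; apply/andP/pbP.
    by case=> /pbP a /pbP b; split.
  by case=> a b; split; apply/pbP.
have UI := count_predUI (pb PA) (pb PB) U.
have disj : count (predI (predU (pb PA) (pb PB)) (pb PS)) U = 0%N.
  rewrite (eq_count (a2 := pred0)) ?count_pred0 // => x /=.
  apply/negP => /andP [/orP [/pbP a|/pbP b] /pbP s].
  - case: s => [[_ [tau [k [k0 kt tt fb]]]]|[_ fb]].
    + apply: (F2 (3 * t) (2 * t) tau k x) => //; rewrite /valid_idx; lia.
    + have m2 : (2 * t + t <= maxn (3 * t) ((3 * t) %/ 2))%N by rewrite (maxn_idPl h2); lia.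
      exact: (F2 _ _ _ _ x vA v2 m2 (conj a fb)).
  - case: s => [[[tau [k [k0 kt tt fa]]] _]|[fa _]].
    + apply: (F2 tau k (3 * t) (2 * t) x) => //; rewrite /valid_idx; lia.
    + have m2 : (t + 2 * t <= maxn ((3 * t) %/ 2) (3 * t))%N by rewrite (maxn_idPr h2); lia.
      exact: (F2 _ _ _ _ x v2 vA m2 (conj fa b)).
have UI2 := count_predUI (predU (pb PA) (pb PB)) (pb PS) U.
have le := count_size (predU (predU (pb PA) (pb PB)) (pb PS)) U.
have key : (count (pb PS) U + 4 * t <= n + count (pb PZ) U)%N by lia.
have keyK : (count (pb PS) U)%:R + 4%:R * t%:R <= n%:R + (count (pb PZ) U)%:R :> K.
  by rewrite -natrM -!natrD ler_nat.
move: HnR; rewrite natrM => HnR.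
lra.
Qed.
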